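(* Let $X$ be a locale with $\mathcal{O}X=\langle G\ \wedge\text{-semilattice}\mid R\rangle_{\mathbf{Frm}}$, where $G$ is a $\wedge$-semilattice and $R$ is a set of relations $\bigvee S\le\bigvee T$ ($S,T\subseteq G$) closed under meeting with elements of $G$, in the sense that with $\bigvee S\le\bigvee T$ also $\bigvee_{s\in S}u\wedge s\le\bigvee_{t\in T}u\wedge t$ is in $R$ for every $u\in G$. Then $X$ is overt if and only if there is a subset $P\subseteq G$ such that: 1. $P$ is upward closed in $G$; 2. for each relation $\bigvee S\le\bigvee T$ in $R$, if $S\cap P$ is inhabited then $T\cap P$ is inhabited; 3. for each $g\in G$, $g\le\bigvee\{1\mid g\in P\}$ holds in $\mathcal{O}X$, where $g$ denotes its image in $\mathcal{O}X$.
   Context: Work constructively: neither excluded middle nor any form of choice is assumed. Presentations: $\langle G\ \wedge\text{-semilattice}\mid R\rangle_{\mathbf{Frm}}$ is the frame universal among frames equipped with a finite-meet-preserving map from $G$ satisfying the relations in $R$. Overtness: $\Omega$ is the frame of truth values. A locale $X$ is overt if ${!}^*\colon\Omega\to\mathcal{O}X$, $p\mapsto\bigvee\{1\mid p=\top\}$, has a left adjoint. *)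

(* Defs.v *)
(* Posets are presented as preorders; "equality" in a frame is the
   induced equivalence a <= b /\ b <= a (setoid style), so no quotients
   or extensionality axioms are needed. *)

Record MeetSemilattice := {
  scar :> Type;
  sle : scar -> scar -> Prop;
  sle_refl : forall a, sle a a;
  sle_trans : forall a b c, sle a b -> sle b c -> sle a c;
  stop : scar;
  smeet : scar -> scar -> scar;
  stop_max : forall a, sle a stop;
  smeet_glb : forall a b c, sle c (smeet a b) <-> (sle c a /\ sle c b)
}.

Record Frame := {
  fcar :> Type;
  fle : fcar -> fcar -> Prop;
  fle_refl : forall a, fle a a;
  fle_trans : forall a b c, fle a b -> fle b c -> fle a c;
  ftop : fcar;
  fmeet : fcar -> fcar -> fcar;
  fjoin : (fcar -> Prop) -> fcar;
  ftop_max : forall a, fle a ftop;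
  fmeet_glb : forall a b c, fle c (fmeet a b) <-> (fle c a /\ fle c b);
  fjoin_lub : forall (S : fcar -> Prop) c,
      fle (fjoin S) c <-> (forall s, S s -> fle s c);
  fdistr : forall a (S : fcar -> Prop),
      fle (fmeet a (fjoin S)) (fjoin (fun x => exists s, S s /\ x = fmeet a s))
}.

Arguments sle {_} _ _.
Arguments stop {_}.
Arguments smeet {_} _ _.
Arguments fle {_} _ _.
Arguments ftop {_}.
Arguments fmeet {_} _ _.
Arguments fjoin {_} _.

Definition feq {L : Frame} (a b : L) : Prop := fle a b /\ fle b a.

Definition img {A B : Type} (f : A -> B) (S : A -> Prop) : B -> Prop :=
  fun y => exists x, S x /\ y = f x.

Definition meet_pres {G : MeetSemilattice} {L : Frame} (f : G -> L) : Prop :=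
  (forall a b, sle a b -> fle (f a) (f b)) /\
  feq (f stop) ftop /\
  (forall a b, feq (f (smeet a b)) (fmeet (f a) (f b))).

Definition frame_hom {L M : Frame} (h : L -> M) : Prop :=
  (forall a b, fle a b -> fle (h a) (h b)) /\
  feq (h ftop) ftop /\
  (forall a b, feq (h (fmeet a b)) (fmeet (h a) (h b))) /\
  (forall S : L -> Prop, feq (h (fjoin S)) (fjoin (img h S))).

(** A set of relations  \/ S <= \/ T  with S, T subsets of G. *)
Definition Relations (G : MeetSemilattice) : Type := (G -> Prop) -> (G -> Prop) -> Prop.

Definition satisfies {G : MeetSemilattice} {M : Frame} (R : Relations G) (f : G -> M) : Prop :=
  forall S T, R S T -> fle (fjoin (img f S)) (fjoin (img f T)).

Definition meet_closed {G : MeetSemilattice} (R : Relations G) : Prop :=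
  forall S T, R S T -> forall u : G,
    exists S' T', R S' T' /\
      (forall x, S' x <-> img (smeet u) S x) /\
      (forall x, T' x <-> img (smeet u) T x).

(** L (with generator map eta) is the frame presented by
    < G meet-semilattice | R >_Frm : universal among frames with a
    finite-meet-preserving map from G satisfying R. *)
Definition is_presentation (G : MeetSemilattice) (R : Relations G)
    (L : Frame) (eta : G -> L) : Prop :=
  meet_pres eta /\ satisfies R eta /\
  forall (M : Frame) (f : G -> M), meet_pres f -> satisfies R f ->
    (exists h : L -> M, frame_hom h /\ forall g, feq (h (eta g)) (f g)) /\
    (forall h1 h2 : L -> M, frame_hom h1 -> frame_hom h2 ->
       (forall g, feq (h1 (eta g)) (f g)) ->
       (forall g, feq (h2 (eta g)) (f g)) ->
       forall a, feq (h1 a) (h2 a)).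

(** !^* : Omega -> OX,  p |-> \/ {1 | p}. Omega = Prop (ordered by ->). *)
Definition bang_star (L : Frame) (p : Prop) : L :=
  fjoin (fun x : L => p /\ x = ftop).

Definition overt (L : Frame) : Prop :=
  exists ex : L -> Prop, forall (a : L) (p : Prop), (ex a -> p) <-> fle a (bang_star L p).

(* Main.v *)
Require Import Defs.

Lemma sm_l (G : MeetSemilattice) (a b : G) : sle (smeet a b) a.
Proof. apply (proj1 (smeet_glb G a b (smeet a b)) (sle_refl G _)). Qed.
Lemma sm_r (G : MeetSemilattice) (a b : G) : sle (smeet a b) b.
Proof. apply (proj1 (smeet_glb G a b (smeet a b)) (sle_refl G _)). Qed.
Lemma sm_comm (G : MeetSemilattice) (a b : G) : sle (smeet a b) (smeet b a).
Proof. apply (smeet_glb G). split; [apply sm_r | apply sm_l]. Qed.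
Lemma sm_mono (G : MeetSemilattice) (a b a' b' : G) :
  sle a a' -> sle b b' -> sle (smeet a b) (smeet a' b').
Proof.
  intros H1 H2. apply (smeet_glb G). split.
  - eapply sle_trans; [apply sm_l|exact H1].
  - eapply sle_trans; [apply sm_r|exact H2].
Qed.
Lemma sm_diag (G : MeetSemilattice) (a : G) : sle a (smeet a a).
Proof. apply (smeet_glb G). split; apply sle_refl. Qed.

Lemma fm_l (L : Frame) (a b : L) : fle (fmeet a b) a.
Proof. apply (proj1 (fmeet_glb L a b (fmeet a b)) (fle_refl L _)). Qed.
Lemma fm_r (L : Frame) (a b : L) : fle (fmeet a b) b.
Proof. apply (proj1 (fmeet_glb L a b (fmeet a b)) (fle_refl L _)). Qed.
Lemma fm_comm (L : Frame) (a b : L) : fle (fmeet a b) (fmeet b a).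
Proof. apply (fmeet_glb L). split; [apply fm_r | apply fm_l]. Qed.
Lemma fj_ub (L : Frame) (S : L -> Prop) x : S x -> fle x (fjoin S).
Proof. intro H. apply (proj1 (fjoin_lub L S (fjoin S)) (fle_refl L _)). exact H. Qed.
Lemma fj_le (L : Frame) (A B : L -> Prop) :
  (forall x, A x -> exists y, B y /\ fle x y) -> fle (fjoin A) (fjoin B).
Proof.
  intro H. apply (fjoin_lub L). intros s Hs. destruct (H s Hs) as (y & Hy & Hle).
  eapply fle_trans; [exact Hle|]. apply fj_ub; exact Hy.
Qed.
Lemma bang_mono (L : Frame) (p q : Prop) : (p -> q) -> fle (bang_star L p) (bang_star L q).
Proof.
  intro H. unfold bang_star. apply fj_le. intros x [Hp Hx]. exists x. split.
  - split; auto.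
  - apply fle_refl.
Qed.
Lemma feq_trans (L : Frame) (a b c : L) : feq a b -> feq b c -> feq a c.
Proof. intros [H1 H2] [H3 H4]; split; eapply fle_trans; eauto. Qed.

Lemma hom_feq (L M : Frame) (h : L -> M) : frame_hom h -> forall a b, feq a b -> feq (h a) (h b).
Proof. intros [Hm _] a b [H1 H2]; split; apply Hm; auto. Qed.

Lemma hom_comp (L M N : Frame) (h : L -> M) (k : M -> N) :
  frame_hom h -> frame_hom k -> frame_hom (fun a => k (h a)).
Proof.
  intros Hh Hk. pose proof Hh as (hm & ht & hmt & hj). pose proof Hk as (km & kt & kmt & kj).
  split; [|split; [|split]].
  - intros a b H; apply km, hm, H.
  - eapply feq_trans; [apply hom_feq; [exact Hk| exact ht]|exact kt].
  - intros a b. eapply feq_trans; [apply hom_feq; [exact Hk| apply hmt]|apply kmt].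
  - intros S. eapply feq_trans; [apply hom_feq; [exact Hk| apply hj]|].
    eapply feq_trans; [apply kj|]. split; apply fj_le.
    + intros x [y [[z [Hz ->]] ->]]. exists (k (h z)). split; [exists z; auto|apply fle_refl].
    + intros x [z [Hz ->]]. exists (k (h z)). split; [exists (h z); split; [exists z; auto|reflexivity]|apply fle_refl].
Qed.

Lemma hom_id (L : Frame) : frame_hom (fun a : L => a).
Proof.
  split; [|split; [|split]].
  - auto.
  - split; apply fle_refl.
  - intros; split; apply fle_refl.
  - intros S; split; apply fj_le.
    + intros x Hx; exists x; split; [exists x; auto|apply fle_refl].
    + intros x [y [Hy ->]]; exists y; split; [auto|apply fle_refl].
Qed.

Inductive cl {G : MeetSemilattice} (R : Relations G) (E : G -> Prop) : G -> Prop :=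
| cl_base g : E g -> cl R E g
| cl_down g h : sle g h -> cl R E h -> cl R E g
| cl_rel S T s : R S T -> (forall t, T t -> cl R E t) -> S s -> cl R E s.

Arguments cl_base {G R E} g _.
Arguments cl_down {G R E} g h _ _.
Arguments cl_rel {G R E} S T s _ _ _.

Lemma cl_idem (G : MeetSemilattice) (R : Relations G) (E F : G -> Prop) :
  (forall g, E g -> cl R F g) -> forall g, cl R E g -> cl R F g.
Proof.
  intros H g Hg. induction Hg as [g Eg|g h Hle Hcl IH|S T s HR HT IH Ss].
  - auto.
  - eapply cl_down; eauto.
  - eapply cl_rel; eauto.
Qed.

Lemma meet_cl (G : MeetSemilattice) (R : Relations G) (HR : meet_closed R)
  (A B C : G -> Prop) :
  (forall a b, A a -> B b -> cl R C (smeet a b)) ->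
  forall h, cl R B h -> forall g, cl R A g -> cl R C (smeet g h).
Proof.
  intros H h Hh. induction Hh as [h Bh|h h' Hle Hcl IH|S T s HRST HT IH Ss].
  - intros g Ag. induction Ag as [g Ag|g g' Hle Hcl IH|S T s HRST HT IH Ss].
    + apply H; auto.
    + apply cl_down with (smeet g' h); [apply sm_mono; [exact Hle|apply sle_refl]|exact IH].
    + destruct (HR S T HRST h) as (S' & T' & HR' & HS' & HT').
      apply cl_down with (smeet h s); [apply sm_comm|].
      apply cl_rel with S' T'; [exact HR'| |].
      * intros t' Ht'. apply HT' in Ht'. destruct Ht' as (t & Tt & ->).
        apply cl_down with (smeet t h); [apply sm_comm|]. apply IH; exact Tt.
      * apply HS'. exists s; split; auto.
  - intros g Ag. apply cl_down with (smeet g h'); [apply sm_mono; [apply sle_refl|exact Hle]|].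
    apply IH; exact Ag.
  - intros g Ag. destruct (HR S T HRST g) as (S' & T' & HR' & HS' & HT').
    apply cl_rel with S' T'; [exact HR'| |].
    + intros t' Ht'. apply HT' in Ht'. destruct Ht' as (t & Tt & ->). apply IH; auto.
    + apply HS'. exists s; split; auto.
Qed.

Lemma cl_inv (G : MeetSemilattice) (R : Relations G) (P : G -> Prop)
  (HP1 : forall g h : G, sle g h -> P g -> P h)
  (HP2 : forall S T, R S T -> (exists s, S s /\ P s) -> (exists t, T t /\ P t))
  (X : G -> Prop) : forall g, cl R X g -> P g -> exists x, X x /\ P x.
Proof.
  intros g Hg. induction Hg as [g Eg|g h Hle Hcl IH|S T s HRST HT IH Ss].
  - intros; exists g; auto.
  - intros Pg. apply IH. eapply HP1; eauto.
  - intros Ps. destruct (HP2 S T HRST (ex_intro _ s (conj Ss Ps))) as (t & Tt & Pt).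
    eapply IH; eauto.
Qed.

Definition cle {G : MeetSemilattice} (R : Relations G) (D E : G -> Prop) : Prop :=
  forall g, D g -> cl R E g.
Definition cmeet {G : MeetSemilattice} (R : Relations G) (D E : G -> Prop) : G -> Prop :=
  fun g => cl R D g /\ cl R E g.
Definition cjoin {G : MeetSemilattice} (Ss : (G -> Prop) -> Prop) : G -> Prop :=
  fun g => exists D, Ss D /\ D g.

Definition CFrame (G : MeetSemilattice) (R : Relations G) (HR : meet_closed R) : Frame.
Proof.
  refine (@Build_Frame (G -> Prop) (cle R) _ _ (fun _ => True) (cmeet R) cjoin _ _ _ _).
  - intros a g Hg. apply cl_base; exact Hg.
  - intros a b c H1 H2 g Hg. eapply cl_idem; eauto.
  - intros a g _. apply cl_base; exact I.
  - intros a b c; split.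
    + intros H; split; intros g Hg; specialize (H g Hg);
        refine (cl_idem G R _ _ _ g H); intros x [Hx1 Hx2]; auto.
    + intros [H1 H2] g Hg. apply cl_base. split; auto.
  - intros S c; split.
    + intros H s Hs g Hg. apply H. exists s; auto.
    + intros H g [D [HD Dg]]. apply (H D HD g Dg).
  - intros a S g [Hg1 Hg2].
    apply cl_down with (smeet g g); [apply sm_diag|].
    refine (meet_cl G R HR a (cjoin S) _ _ g Hg2 g Hg1).
    intros a0 b Ha0 [D [HD Db]]. apply cl_base.
    exists (cmeet R a D). split; [exists D; auto|].
    split.
    + apply cl_down with a0; [apply sm_l|apply cl_base; exact Ha0].
    + apply cl_down with b; [apply sm_r|apply cl_base; exact Db].
Defined.

Definition gen (G : MeetSemilattice) (g : G) : G -> Prop := fun x => x = g.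

Lemma gen_pres (G : MeetSemilattice) (R : Relations G) (HR : meet_closed R) :
  @meet_pres G (CFrame G R HR) (gen G).
Proof.
  split; [|split].
  - intros a b Hab x Hx. cbn in Hx; unfold gen in Hx. subst x. apply cl_down with b; [exact Hab|apply cl_base; reflexivity].
  - split.
    + intros x _. apply cl_base; exact I.
    + intros x _. apply cl_down with stop; [apply stop_max|apply cl_base; reflexivity].
  - intros a b; split.
    + intros x Hx. cbn in Hx; unfold gen in Hx. subst x. apply cl_base. split.
      * apply cl_down with a; [apply sm_l|apply cl_base; reflexivity].
      * apply cl_down with b; [apply sm_r|apply cl_base; reflexivity].
    + intros x [H1 H2]. apply cl_down with (smeet x x); [apply sm_diag|].
      refine (meet_cl G R HR (gen G a) (gen G b) _ _ x H2 x H1).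
      intros a0 b0 Ha Hb. unfold gen in Ha, Hb. subst. apply cl_base; reflexivity.
Qed.

Lemma gen_sat (G : MeetSemilattice) (R : Relations G) (HR : meet_closed R) :
  @satisfies G (CFrame G R HR) R (gen G).
Proof.
  intros S T HST g [D [[x [Sx ->]] Dg]]. unfold gen in Dg. subst g.
  apply cl_rel with S T; [exact HST| |exact Sx].
  intros t Tt. apply cl_base. exists (gen G t). split; [exists t; auto|reflexivity].
Qed.


Lemma k_cl (G : MeetSemilattice) (R : Relations G) (L : Frame) (eta : G -> L)
  (Hp : meet_pres eta) (Hs : satisfies R eta) (E : G -> Prop) :
  forall g, cl R E g -> fle (eta g) (fjoin (img eta E)).
Proof.
  destruct Hp as [Hm _].
  intros g Hg. induction Hg as [g Eg|g h Hle Hcl IH|S T s HRST HT IH Ss].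
  - apply fj_ub. exists g; auto.
  - eapply fle_trans; [apply Hm; exact Hle|exact IH].
  - apply fle_trans with (fjoin (img eta S)); [apply fj_ub; exists s; split; [exact Ss|reflexivity]|].
    eapply fle_trans; [apply Hs; exact HRST|].
    apply (fjoin_lub L). intros x [t [Tt ->]]. apply IH; exact Tt.
Qed.

Lemma k_hom (G : MeetSemilattice) (R : Relations G) (HR : meet_closed R)
  (L : Frame) (eta : G -> L) (Hp : meet_pres eta) (Hs : satisfies R eta) :
  @frame_hom (CFrame G R HR) L (fun D => fjoin (img eta D)).
Proof.
  assert (Km : forall D E : G -> Prop, cle R D E -> fle (fjoin (img eta D)) (fjoin (img eta E))).
  { intros D E H. apply (fjoin_lub L). intros x [g [Dg ->]]. apply (k_cl G R L eta Hp Hs); auto. }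
  pose proof Hp as (Hm & Ht & Hmt).
  split; [|split; [|split]].
  - exact Km.
  - split; [apply ftop_max|]. eapply fle_trans; [apply Ht|].
    apply fj_ub. exists stop; split; [exact I|reflexivity].
  - intros D E. split.
    + apply (fmeet_glb L). split; apply Km.
      * intros g [H1 _]; exact H1.
      * intros g [_ H2]; exact H2.
    + cbn. eapply fle_trans; [apply fdistr|]. apply (fjoin_lub L).
      intros x [s [[e [Ee ->]] ->]].
      eapply fle_trans; [apply fm_comm|].
      eapply fle_trans; [apply fdistr|]. apply (fjoin_lub L).
      intros y [s [[d [Dd ->]] ->]].
      eapply fle_trans; [apply (proj2 (Hmt e d))|].
      apply fj_ub. exists (smeet e d). split; [|reflexivity].
      split.
      * apply cl_down with d; [apply sm_r|apply cl_base; exact Dd].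
      * apply cl_down with e; [apply sm_l|apply cl_base; exact Ee].
  - intros Ss. split.
    + apply (fjoin_lub L). intros x [g [[D [HD Dg]] ->]].
      eapply fle_trans; [|apply fj_ub; exists D; split; [exact HD|reflexivity]].
      apply fj_ub. exists g; auto.
    + apply (fjoin_lub L). intros x [D [HD ->]]. apply Km.
      intros g Dg. apply cl_base. exists D; auto.
Qed.

Theorem mainTheorem13 (G : MeetSemilattice) (R : Relations G)
    (L : Frame) (eta : G -> L) :
  meet_closed R ->
  is_presentation G R L eta ->
  (overt L <->
   exists P : G -> Prop,
     (forall g h : G, sle g h -> P g -> P h) /\
     (forall S T, R S T ->
        (exists s, S s /\ P s) -> (exists t, T t /\ P t)) /\
     (forall g : G, fle (eta g) (fjoin (fun x : L => P g /\ x = ftop)))).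
Proof.
  intros HR [Hp [Hs Huniv]]. split.
  - intros [ex Hex].
    assert (Hself : forall a, fle a (bang_star L (ex a))) by (intro a; apply Hex; auto).
    assert (Hmono : forall a b, fle a b -> ex a -> ex b).
    { intros a b H. apply Hex. eapply fle_trans; [exact H|apply Hself]. }
    exists (fun g => ex (eta g)). split; [|split].
    + intros g h H. apply Hmono. apply (proj1 Hp); exact H.
    + intros S T HST [s [Ss Ps]].
      assert (Hj : ex (fjoin (img eta T))).
      { eapply Hmono; [|exact Ps].
        apply fle_trans with (fjoin (img eta S)); [apply fj_ub; exists s; split; [exact Ss|reflexivity]|].
        apply Hs; exact HST. }
      revert Hj. apply Hex. apply (fjoin_lub L). intros x [t [Tt ->]].
      eapply fle_trans; [apply Hself|]. apply bang_mono. intro H. exists t; auto.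
    + intro g. apply Hself.
  - intros (P & HP1 & HP2 & HP3).
    destruct (Huniv (CFrame G R HR) (gen G) (gen_pres G R HR) (gen_sat G R HR))
      as [[h [Hh Hhf]] _].
    destruct (Huniv L eta Hp Hs) as [_ Huniq].
    set (k := fun D : CFrame G R HR => fjoin (img eta D)).
    assert (Hk : frame_hom k) by (apply k_hom; auto).
    assert (Hkh : forall a, feq (k (h a)) a).
    { apply (Huniq (fun a => k (h a)) (fun a => a)).
      - apply hom_comp; auto.
      - apply hom_id.
      - intro g. eapply feq_trans; [apply hom_feq; [exact Hk|apply Hhf]|].
        split.
        + apply (fjoin_lub L). intros x [y [Hy ->]]. unfold gen in Hy. subst; apply fle_refl.
        + apply fj_ub. exists g; split; reflexivity.
      - intro g; split; apply fle_refl. }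
    exists (fun a => exists g, h a g /\ P g). intros a p. split.
    + intro Hex. eapply fle_trans; [apply (proj2 (Hkh a))|].
      apply (fjoin_lub L). intros x [g [Hg ->]].
      eapply fle_trans; [apply HP3|]. apply bang_mono. intro Pg. apply Hex. exists g; auto.
    + intros Hle [g [Hg Pg]].
      pose proof Hh as (hm & _ & _ & hj).
      pose proof (hm _ _ Hle g Hg) as H1.
      unfold bang_star in H1.
      pose proof (proj1 (hj (fun x : L => p /\ x = ftop))) as H2.
      pose proof (cl_idem G R _ _ H2 g H1) as H3.
      destruct (cl_inv G R P HP1 HP2 _ g H3 Pg) as (x & [D [[y [[Hp' _] _]] _]] & _).
      exact Hp'.
Qed.
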